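(* Let $\mathcal{A}=(\Sigma,Q,q_0,\delta,F)$ be an alternating Büchi automaton and let $p\in\Sigma$. If $\mathcal{A}$ is nondeterministic, then $\mathcal{A}$ is in existential normal form for $p$. If $\mathcal{A}$ is universal, then $\mathcal{A}$ is in universal normal form for $p$. If $\mathcal{A}$ is deterministic, then $\mathcal{A}$ is in both existential and universal normal form for $p$.
   Context: Let $\Sigma$ be a finite set of Boolean variables; words are infinite sequences $w\in(2^\Sigma)^\omega$ with $k$-th letter $w[k]$. $L_\Sigma=\Sigma\cup\{\neg a: a\in\Sigma\}$ is the set of literals; in a letter $\sigma\subseteq\Sigma$ the literal $a$ is true iff $a\in\sigma$ and $\neg a$ is true iff $a\notin\sigma$. $\mathbb{B}^+(S)$ denotes positive Boolean formulas (built from atoms in $S$, $\wedge$, $\vee$, true, false). An alternating Büchi automaton is $\mathcal{A}=(\Sigma,Q,q_0,\delta,F)$ with finite state set $Q$, initial state $q_0$, transition function $\delta:Q\to\mathbb{B}^+(Q\cup L_\Sigma)$ (elements of $Q\cup L_\Sigma$ are treated as atoms), and $F\subseteq Q$. A set $X\subseteq Q\cup L_\Sigma$ satisfies $\delta(q)$ if $\delta(q)$ evaluates to true when exactly the atoms in $X$ are true. A run on $w$ is a $Q$-labeled tree whose root is labeled $q_0$ such that for every node at depth $k$ labeled $q$, with $S$ the set of labels of its children, $S\cup\{\ell\in L_\Sigma:\ell \text{ true in } w[k]\}$ satisfies $\delta(q)$; it is accepting if every infinite branch visits $F$ infinitely often; $\mathcal{L}(\mathcal{A})$ is the set of words with an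 accepting run. For $p\in\Sigma$: $\mathcal{L}(\exists p.\mathcal{A})$ is the set of words $w\in(2^{\Sigma\setminus\{p\}})^\omega$ such that some $w'\in(2^\Sigma)^\omega$ with $w'[k]\setminus\{p\}=w[k]$ for all $k$ lies in $\mathcal{L}(\mathcal{A})$; $\mathcal{L}(\forall p.\mathcal{A})$ is the set of such $w$ for which every such $w'$ lies in $\mathcal{L}(\mathcal{A})$. For a formula $B$, $B[p\mapsto 1]$ replaces atom $p$ by true and atom $\neg p$ by false, and $B[p\mapsto 0]$ the reverse. The state-wise existential quantification $\exists^\circ p.\mathcal{A}$ is $(\Sigma\setminus\{p\},Q,q_0,\delta',F)$ with $\delta'(q)=\delta(q)[p\mapsto1]\vee\delta(q)[p\mapsto0]$; the state-wise universal quantification $\forall^\circ p.\mathcal{A}$ is the same with $\delta'(q)=\delta(q)[p\mapsto1]\wedge\delta(q)[p\mapsto0]$. $\mathcal{A}$ is in existential normal form for $p$ if $\mathcal{L}(\exists^\circ p.\mathcal{A})=\mathcal{L}(\exists p.\mathcal{A})$, and in universal normal form for $p$ if $\mathcal{L}(\forall^\circ p.\mathcal{A})=\mathcal{L}(\forall p.\mathcal{A})$. $\mathcal{A}$ is nondeterministic if for every state $q$ the transition formula $\delta(q)$, restricted to its state part, is a disjunction of states (i.e., for every state $q$ and every letter, once the literals are evaluated according to the letter, $\delta(q)$ is equivalent to a disjunction of states); universal if it is analogously a conjunction of states; deterministic in the standard sense (for every state and letter there is a single successor state). *)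

(* Defs.v *)
From mathcomp Require Import all_boot.
Set Implicit Arguments. Unset Strict Implicit. Unset Printing Implicit Defensive.

Inductive pbf (A : Type) : Type :=
| PAtom of A
| PAnd of pbf A & pbf A
| POr of pbf A & pbf A
| PTrue
| PFalse.
Arguments PTrue {A}. Arguments PFalse {A}.

Fixpoint psat (A : Type) (v : A -> Prop) (f : pbf A) : Prop :=
  match f with
  | PAtom a => v a
  | PAnd f1 f2 => psat v f1 /\ psat v f2
  | POr f1 f2 => psat v f1 \/ psat v f2
  | PTrue => True
  | PFalse => False
  end.

Fixpoint psubst (A : Type) (s : A -> pbf A) (f : pbf A) : pbf A :=
  match f with
  | PAtom a => s a
  | PAnd f1 f2 => PAnd (psubst s f1) (psubst s f2)
  | POr f1 f2 => POr (psubst s f1) (psubst s f2)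
  | PTrue => PTrue
  | PFalse => PFalse
  end.

Inductive lit (V : Type) : Type := Pos of V | Neg of V.

Definition lit_true (V : finType) (sigma : {set V}) (l : lit V) : Prop :=
  match l with Pos a => a \in sigma | Neg a => a \notin sigma end.

(* Alternating Buchi automaton with variable set V (Sigma) and state set Q *)
Record aba (V Q : finType) := ABA {
  init : Q;
  delta : Q -> pbf (Q + lit V);
  accept : {set Q}
}.

Definition word (V : finType) := nat -> {set V}.

(* A run tree: nodes are finite sequences of child indices (prefix-closed set N),
   the depth of node x is size x, labels given by lab. *)
Definition is_run (V Q : finType) (A : aba V Q) (w : word V)
    (N : seq nat -> Prop) (lab : seq nat -> Q) : Prop :=
  [/\ N [::], lab [::] = init A,
      (forall x i, N (rcons x i) -> N x) &
      forall x, N x ->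
        psat (fun a => match a with
                       | inl q => exists i, N (rcons x i) /\ lab (rcons x i) = q
                       | inr l => lit_true (w (size x)) l
                       end) (delta A (lab x))].

Definition run_accepting (V Q : finType) (A : aba V Q)
    (N : seq nat -> Prop) (lab : seq nat -> Q) : Prop :=
  forall b : nat -> nat, (forall n, N (mkseq b n)) ->
    forall n, exists m, n <= m /\ lab (mkseq b m) \in accept A.

Definition lang (V Q : finType) (A : aba V Q) (w : word V) : Prop :=
  exists N lab, is_run A w N lab /\ run_accepting A N lab.

(* words over Sigma \ {p} are represented as words never containing p *)
Definition p_free (V : finType) (p : V) (w : word V) : Prop :=
  forall k, p \notin w k.

Definition ext_of (V : finType) (p : V) (w' w : word V) : Prop :=
  forall k, w' k :\ p = w k.

Definition lang_exists (V Q : finType) (A : aba V Q) (p : V) (w : word V) : Prop :=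
  exists w', ext_of p w' w /\ lang A w'.

Definition lang_forall (V Q : finType) (A : aba V Q) (p : V) (w : word V) : Prop :=
  forall w', ext_of p w' w -> lang A w'.

Definition subst_p (V Q : finType) (p : V) (b : bool) (f : pbf (Q + lit V)) :=
  psubst (fun a => match a with
                   | inr (Pos x) => if x == p then (if b then PTrue else PFalse) else PAtom a
                   | inr (Neg x) => if x == p then (if b then PFalse else PTrue) else PAtom a
                   | inl _ => PAtom a
                   end) f.

Definition sw_exists (V Q : finType) (A : aba V Q) (p : V) : aba V Q :=
  ABA (init A) (fun q => POr (subst_p p true (delta A q)) (subst_p p false (delta A q)))
      (accept A).

Definition sw_forall (V Q : finType) (A : aba V Q) (p : V) : aba V Q :=
  ABA (init A) (fun q => PAnd (subst_p p true (delta A q)) (subst_p p false (delta A q)))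
      (accept A).

Definition existential_nf (V Q : finType) (A : aba V Q) (p : V) : Prop :=
  forall w, p_free p w -> (lang (sw_exists A p) w <-> lang_exists A p w).

Definition universal_nf (V Q : finType) (A : aba V Q) (p : V) : Prop :=
  forall w, p_free p w -> (lang (sw_forall A p) w <-> lang_forall A p w).

Definition eval_at (V Q : finType) (A : aba V Q) (q : Q) (sigma : {set V}) (X : {set Q}) : Prop :=
  psat (fun a => match a with inl q' => q' \in X | inr l => lit_true sigma l end) (delta A q).

Definition nondeterministic (V Q : finType) (A : aba V Q) : Prop :=
  forall q sigma, exists S : {set Q},
    forall X : {set Q}, eval_at A q sigma X <-> [exists q' in S, q' \in X].

Definition universal (V Q : finType) (A : aba V Q) : Prop :=
  forall q sigma, exists S : {set Q},
    forall X : {set Q}, eval_at A q sigma X <-> [forall q' in S, q' \in X].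

Definition deterministic (V Q : finType) (A : aba V Q) : Prop :=
  forall q sigma, exists q' : Q,
    forall X : {set Q}, eval_at A q sigma X <-> q' \in X.

(* Main.v *)
Require Import Defs.
From mathcomp Require Import all_boot.
From Stdlib Require Import Classical IndefiniteDescription.

Set Implicit Arguments. Unset Strict Implicit. Unset Printing Implicit Defensive.

Definition cid := constructive_indefinite_description.

Definition val (V Q : finType) (P : Q -> Prop) (s : {set V}) : Q + lit V -> Prop :=
  fun a => match a with inl q => P q | inr l => lit_true s l end.

Lemma psat_ext (A : Type) (v v' : A -> Prop) f :
  (forall a, v a <-> v' a) -> (psat v f <-> psat v' f).
Proof. move=> H; elim: f => [a|f1 IH1 f2 IH2|f1 IH1 f2 IH2||] /=; try tauto; apply: H. Qed.

Lemma psat_subst (A : Type) (v : A -> Prop) s f :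
  psat v (psubst s f) <-> psat (fun a => psat v (s a)) f.
Proof. elim: f => [a|f1 IH1 f2 IH2|f1 IH1 f2 IH2||] /=; tauto. Qed.

Lemma psat_mono (A : Type) (v v' : A -> Prop) f :
  (forall a, v a -> v' a) -> psat v f -> psat v' f.
Proof. move=> H; elim: f => [a|f1 IH1 f2 IH2|f1 IH1 f2 IH2||] /=; try tauto; apply: H. Qed.

Lemma key (V Q : finType) (p : V) (P : Q -> Prop) (sigma sigma' : {set V}) b f :
  (p \in sigma') = b -> sigma' :\ p = sigma :\ p ->
  (psat (val P sigma) (subst_p p b f) <-> psat (val P sigma') f).
Proof.
move=> Hb Heq; rewrite /subst_p psat_subst; apply: psat_ext.
case=> [q|[x|x]] /=; first by [].
- case: eqP => [->|nx].
    by rewrite -Hb; case: (p \in sigma') => /=; split.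
  have: (x \in sigma :\ p) = (x \in sigma' :\ p) by rewrite Heq.
  have nx' : x != p by apply/eqP.
  by rewrite !inE nx' /= => ->.
- case: eqP => [->|nx].
    by rewrite -Hb; case: (p \in sigma') => /=; split.
  have: (x \in sigma :\ p) = (x \in sigma' :\ p) by rewrite Heq.
  have nx' : x != p by apply/eqP.
  by rewrite !inE nx' /= => ->.
Qed.

Lemma setD1_free (V : finType) (p : V) (s : {set V}) : p \notin s -> s :\ p = s.
Proof.
move=> h; apply/setP => x; rewrite !inE; case: eqP => // ->.
by rewrite (negbTE h).
Qed.

Definition sig (V : finType) (p : V) (w : word V) (b : bool) k :=
  if b then p |: w k else w k.

Lemma key_sig (V Q : finType) (p : V) (w : word V) (P : Q -> Prop) b k f :
  p \notin w k ->
  (psat (val P (w k)) (subst_p p b f) <-> psat (val P (sig p w b k)) f).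
Proof.
move=> hp; apply: key; rewrite /sig; case: b.
- by rewrite !inE eqxx.
- by rewrite (negbTE hp).
- by apply/setP => x; rewrite !inE; case: eqP.
- by [].
Qed.

Lemma set_of (Q : finType) (P : Q -> Prop) : exists X : {set Q}, forall q, q \in X <-> P q.
Proof.
have h q : exists b : bool, b <-> P q.
  by case: (classic (P q)) => H; [exists true | exists false]; split.
exists [set q | sval (cid (h q))] => q; rewrite inE; exact: (svalP (cid (h q))).
Qed.

Lemma mkseq_rcons (c : nat -> nat) m : mkseq c m.+1 = rcons (mkseq c m) (c m).
Proof. by rewrite /mkseq -addn1 iotaD map_cat add0n cats1. Qed.

Lemma path_build (P : seq nat -> Prop) (R : seq nat -> nat -> Prop) :
  P [::] -> (forall y, P y -> exists i, P (rcons y i) /\ R y i) ->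
  exists c : nat -> nat, forall m, P (mkseq c m) /\ R (mkseq c m) (c m).
Proof.
move=> P0 step.
have g_ex y : exists i, P y -> P (rcons y i) /\ R y i.
  case: (classic (P y)) => [Py|nPy].
    by case: (step y Py) => i Hi; exists i.
  by exists 0.
pose g y := sval (cid (g_ex y)).
have gP y : P y -> P (rcons y (g y)) /\ R y (g y) := svalP (cid (g_ex y)).
pose fix ys m := if m is m'.+1 then rcons (ys m') (g (ys m')) else [::].
have E m : mkseq (fun m => g (ys m)) m = ys m.
  by elim: m => [|m IH] //; rewrite mkseq_rcons IH.
have Py m : P (ys m) by elim: m => [|m IH] //=; case: (gP _ IH).
exists (fun m => g (ys m)) => m; rewrite E; split; [exact: Py | exact: (gP _ (Py m)).2].
Qed.

Lemma exists_back (V Q : finType) (A : aba V Q) (p : V) (w : word V) :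
  p_free p w -> lang_exists A p w -> lang (sw_exists A p) w.
Proof.
move=> hw [w' [ext [N [lab [[r1 r2 r3 r4] acc]]]]].
exists N, lab; split => //; split => // x Nx.
have h := r4 x Nx.
set P := fun q => exists i, N (rcons x i) /\ lab (rcons x i) = q.
have E : (w' (size x)) :\ p = (w (size x)) :\ p by rewrite ext setD1_free.
change (psat (val P (w (size x))) (POr (subst_p p true (delta A (lab x)))
                                      (subst_p p false (delta A (lab x))))).
case Eb: (p \in w' (size x)); [left|right];
  exact: (proj2 (@key V Q p P (w (size x)) (w' (size x)) _ (delta A (lab x)) Eb E) h).
Qed.

Lemma forall_fwd (V Q : finType) (A : aba V Q) (p : V) (w : word V) :
  p_free p w -> lang (sw_forall A p) w -> lang_forall A p w.
Proof.
move=> hw [N [lab [[r1 r2 r3 r4] acc]]] w' ext.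
exists N, lab; split => //; split => // x Nx.
have h := r4 x Nx.
set P := fun q => exists i, N (rcons x i) /\ lab (rcons x i) = q.
have E : (w' (size x)) :\ p = (w (size x)) :\ p by rewrite ext setD1_free.
change (psat (val P (w (size x))) (PAnd (subst_p p true (delta A (lab x)))
                                      (subst_p p false (delta A (lab x))))) in h.
case: h => h1 h2.
case Eb: (p \in w' (size x)).
  exact: (proj1 (@key V Q p P (w (size x)) (w' (size x)) _ (delta A (lab x)) Eb E) h1).
exact: (proj1 (@key V Q p P (w (size x)) (w' (size x)) _ (delta A (lab x)) Eb E) h2).
Qed.

Lemma nondet_fwd (V Q : finType) (A : aba V Q) (p : V) (w : word V) :
  nondeterministic A -> p_free p w -> lang (sw_exists A p) w -> lang_exists A p w.
Proof.
move=> Hn hw [N [lab [[r1 r2 r3 r4] acc]]].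
pose R y i := exists b, eval_at A (lab y) (sig p w b (size y)) [set lab (rcons y i)].
have [c Hc] : exists c, forall m, N (mkseq c m) /\ R (mkseq c m) (c m).
  apply: path_build => // y Ny.
  have h := r4 y Ny.
  set P := fun q => exists i, N (rcons y i) /\ lab (rcons y i) = q.
  have [X HX] := set_of P.
  have h' : exists b, eval_at A (lab y) (sig p w b (size y)) X.
    change (psat (val P (w (size y))) (POr (subst_p p true (delta A (lab y)))
                (subst_p p false (delta A (lab y))))) in h.
    have hX b : psat (val P (sig p w b (size y))) (delta A (lab y)) ->
                eval_at A (lab y) (sig p w b (size y)) X.
      move=> hb; rewrite /eval_at; apply: (psat_mono _ hb) => -[q|l] /=.
        by move/HX.
      by move=> hl; exact: hl.
    case: h => h; [exists true | exists false]; apply: hX;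
      exact: (proj1 (@key_sig V Q p w P _ (size y) _ (hw (size y))) h).
  case: h' => b hb.
  have [S HS] := Hn (lab y) (sig p w b (size y)).
  case/HS/existsP: hb => q' /andP [q'S /HX [i [Ni Li]]].
  exists i; split => //; exists b; apply/HS/existsP; exists q'.
  by rewrite q'S Li in_set1 eqxx.
pose bit m := sval (cid (proj2 (Hc m))).
have bitP m : eval_at A (lab (mkseq c m)) (sig p w (bit m) m)
                 [set lab (rcons (mkseq c m) (c m))].
  have := svalP (cid (proj2 (Hc m))); rewrite -/(bit m).
  by rewrite size_mkseq.
exists (fun m => sig p w (bit m) m); split.
  move=> k; rewrite /sig; case: (bit k); last exact: setD1_free.
  apply/setP => x; rewrite !inE; case: eqP => [->|] /=; last by [].
  by rewrite (negbTE (hw k)).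
exists (fun _ => True), (fun x => lab (mkseq c (size x))); split.
  split => //.
  move=> x _; have := bitP (size x); rewrite /eval_at.
  apply: psat_mono => -[q|l] /=.
    rewrite inE => /eqP ->; exists 0; split => //.
    by rewrite size_rcons mkseq_rcons.
  by move=> hl; exact: hl.
move=> b' _ n; have [m [nm Hm]] := acc c (fun m => proj1 (Hc m)) n.
by exists m; split => //; rewrite size_mkseq.
Qed.

Definition dec (Q : finType) (q0 : Q) (i : nat) : Q := nth q0 (enum Q) i.

Fixpoint vf (Q : finType) (q0 : Q) (T : Q -> nat -> {set Q}) (q : Q) (k : nat)
  (x : seq nat) : bool :=
  match x with
  | [::] => true
  | i :: x' => (dec q0 i \in T q k) && vf q0 T (dec q0 i) k.+1 x'
  end.

Lemma vf_rcons (Q : finType) (q0 : Q) T q k x i :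
  vf q0 T q k (rcons x i) =
  vf q0 T q k x && (dec q0 i \in T (last q (map (dec q0) x)) (k + size x)).
Proof.
elim: x q k => [|j x IH] q k /=; first by rewrite addn0 andbT.
by rewrite IH addnS andbA.
Qed.

Lemma univ_back (V Q : finType) (A : aba V Q) (p : V) (w : word V) :
  universal A -> p_free p w -> lang_forall A p w -> lang (sw_forall A p) w.
Proof.
move=> Hu hw H.
pose Sf q s := sval (cid (Hu q s)).
have SfP q s X : eval_at A q s X <-> [forall q' in Sf q s, q' \in X].
  exact: (svalP (cid (Hu q s)) X).
pose T q k := Sf q (p |: w k) :|: Sf q (w k).
pose q0 := init A.
pose lab x := last q0 (map (dec q0) x).
have labR x i : lab (rcons x i) = dec q0 i by rewrite /lab map_rcons last_rcons.
pose N x := vf q0 T q0 0 x.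
have NR x i : N (rcons x i) = N x && (dec q0 i \in T (lab x) (size x)).
  by rewrite /N vf_rcons.
exists (fun x => N x), lab; split.
  split => //.
  - by move=> x i; rewrite NR => /andP [].
  move=> x Nx.
  set P := fun q => exists i, N (rcons x i) /\ lab (rcons x i) = q.
  have HP q : P q <-> q \in T (lab x) (size x).
    split.
      by case=> i [Ni <-]; move: Ni; rewrite NR labR => /andP [].
    move=> hq; exists (index q (enum Q)); rewrite NR labR /dec nth_index ?mem_enum //.
    by rewrite Nx hq.
  have ev s : Sf (lab x) s \subset T (lab x) (size x) ->
     psat (val P s) (delta A (lab x)).
    move=> sub; have := proj2 (SfP (lab x) s (T (lab x) (size x))).
    rewrite /eval_at => h.
    have {}h : psat (fun a => match a with
                | inl q' => q' \in T (lab x) (size x)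
                | inr l => lit_true s l end) (delta A (lab x)).
      apply: h; apply/forall_inP => q' hq'; exact: (subsetP sub).
    apply: (psat_mono _ h) => -[q|l] /=; first by move/HP.
    by move=> hl; exact: hl.
  change (psat (val P (w (size x))) (PAnd (subst_p p true (delta A (lab x)))
                (subst_p p false (delta A (lab x))))).
  split.
    apply: (proj2 (@key_sig V Q p w P true (size x) _ (hw (size x)))).
    by apply: ev; rewrite /sig subsetUl.
  apply: (proj2 (@key_sig V Q p w P false (size x) _ (hw (size x)))).
  by apply: ev; rewrite /sig subsetUr.
move=> b hb n.
pose qs m := lab (mkseq b m).
have qsS m : qs m.+1 = dec q0 (b m) by rewrite /qs mkseq_rcons labR.
have qsT m : qs m.+1 \in T (qs m) m.
  have := hb m.+1; rewrite mkseq_rcons NR size_mkseq => /andP [_].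
  by rewrite qsS.
pose w' k := if qs k.+1 \in Sf (qs k) (p |: w k) then p |: w k else w k.
have ext : ext_of p w' w.
  move=> k; rewrite /w'; case: ifP => _; last exact: setD1_free.
  apply/setP => x; rewrite !inE; case: eqP => [->|] /=; last by [].
  by rewrite (negbTE (hw k)).
have qsS' m : qs m.+1 \in Sf (qs m) (w' m).
  rewrite /w'; case: ifP => // hn.
  by move: (qsT m); rewrite inE hn.
have [N' [lab' [[r1 r2 r3 r4] acc]]] := H w' ext.
have [c Hc] : exists c, forall m,
    (N' (mkseq c m) /\ lab' (mkseq c m) = qs (size (mkseq c m))) /\ True.
  apply: (@path_build (fun y => N' y /\ lab' y = qs (size y)) (fun _ _ => True)).
    by rewrite r2.
  move=> y [Ny Ly].
  have h := r4 y Ny.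
  set P := fun q => exists i, N' (rcons y i) /\ lab' (rcons y i) = q.
  have [X HX] := set_of P.
  have hX : eval_at A (lab' y) (w' (size y)) X.
    rewrite /eval_at; apply: (psat_mono _ h) => -[q|l] /=; first by move/HX.
    by move=> hl; exact: hl.
  move/SfP/forall_inP: hX; rewrite Ly => /(_ _ (qsS' (size y))) /HX [i [Ni Li]].
  by exists i; rewrite size_rcons.
have [m [nm Hm]] := acc c (fun m => proj1 (proj1 (Hc m))) n.
exists m; split => //.
by move: Hm; rewrite (proj2 (proj1 (Hc m))) size_mkseq.
Qed.

Lemma det_nondet (V Q : finType) (A : aba V Q) : deterministic A -> nondeterministic A.
Proof.
move=> Hd q s; have [q' Hq'] := Hd q s; exists [set q'] => X; rewrite Hq'.
split.
  by move=> h; apply/existsP; exists q'; rewrite in_set1 eqxx h.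
by case/existsP => q'' /andP [/set1P -> ].
Qed.

Lemma det_univ (V Q : finType) (A : aba V Q) : deterministic A -> universal A.
Proof.
move=> Hd q s; have [q' Hq'] := Hd q s; exists [set q'] => X; rewrite Hq'.
split.
  by move=> h; apply/forall_inP => q'' /set1P ->.
by move/forall_inP; apply; rewrite in_set1.
Qed.

Theorem mainTheorem1 (V Q : finType) (A : aba V Q) (p : V) :
  [/\ nondeterministic A -> existential_nf A p,
      universal A -> universal_nf A p &
      deterministic A -> existential_nf A p /\ universal_nf A p].
Proof.
have E : nondeterministic A -> existential_nf A p.
  move=> Hn w hw; split; [exact: nondet_fwd | exact: exists_back].
have U : universal A -> universal_nf A p.
  move=> Hu w hw; split; [exact: forall_fwd | exact: univ_back].
split => // Hd; split; [apply: E; exact: det_nondet | apply: U; exact: det_univ].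
Qed.
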